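(* Let $p\in(0,1)$, $\gamma>0$, $B>0$, $w,N\in\mathbb{N}$, and let $(\xi_1^{(N)*},\dots,\xi_N^{(N)*})$ be the unique maximizer of $\mathcal{T}_N$. Then its effective length is $N$, i.e. $\xi_N^{(N)*}>0$.
   Context: Logarithms are base 2. For an admissible (nonnegative, with sum at most $B$) sequence $(x_j)_{j\ge1}$, $$\mathcal{T}_\infty(x_1,x_2,\dots)=\sum_{k=1}^{w}p^2(1-p)^{k-1}\frac{k}{2}\log_2\!\Big(1+\gamma\frac{B}{k}\Big)+\sum_{j=1}^{\infty}p(1-p)^{j+w-1}\frac12\log_2(1+\gamma x_j)+\sum_{k=1}^{\infty}p^2(1-p)^{k+w-1}\frac{w}{2}\log_2\!\Big(1+\gamma\frac{B-\sum_{j=1}^{k}x_j}{w}\Big).$$ For $N\in\mathbb{N}$ and $\xi_1,\dots,\xi_N\ge0$ with $\sum_{j=1}^N\xi_j\le B$, define $\mathcal{T}_N(\xi_1,\dots,\xi_N)=\mathcal{T}_\infty(\xi_1,\dots,\xi_N,0,0,\dots)$. $\mathcal{T}_N$ has a unique maximizer over this compact set, denoted $(\xi_j^{(N)*})_{j=1}^N$. The effective length of a finite sequence is the largest index $J$ with $\xi_J>0$ (all later entries being zero). *)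

(* Defs.v *)
From Stdlib Require Import Reals Lra.
From Coquelicot Require Import Coquelicot.
Open Scope R_scope.

Definition log2 (x : R) : R := ln x / ln 2.

Fixpoint rsum (f : nat -> R) (a n : nat) : R :=
  match n with
  | O => 0
  | S m => rsum f a m + f (a + m)%nat
  end.

(* Sequences (x_j)_{j>=1} are represented 0-based: x j in Coq is x_{j+1}.
   prefix x k = x_1 + ... + x_k. *)
Definition prefix (x : nat -> R) (k : nat) : R := rsum x 0 k.

Definition T_inf (p gamma B : R) (w : nat) (x : nat -> R) : R :=
  rsum (fun k => p ^ 2 * (1 - p) ^ (k - 1) * (INR k / 2)
                   * log2 (1 + gamma * (B / INR k))) 1 w
  + Series (fun i => p * (1 - p) ^ (S i + w - 1) * (1 / 2)
                       * log2 (1 + gamma * x i))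
  + Series (fun i => p ^ 2 * (1 - p) ^ (S i + w - 1) * (INR w / 2)
                       * log2 (1 + gamma * ((B - prefix x (S i)) / INR w))).

Definition ext (N : nat) (xi : nat -> R) : nat -> R :=
  fun i => if (i <? N)%nat then xi i else 0.

Definition T_N (p gamma B : R) (w N : nat) (xi : nat -> R) : R :=
  T_inf p gamma B w (ext N xi).

Definition admissibleN (B : R) (N : nat) (xi : nat -> R) : Prop :=
  (forall i, (i < N)%nat -> 0 <= xi i) /\ prefix xi N <= B.

Definition is_maximizer (p gamma B : R) (w N : nat) (xi : nat -> R) : Prop :=
  admissibleN B N xi /\
  forall eta, admissibleN B N eta -> T_N p gamma B w N eta <= T_N p gamma B w N xi.

(* Main.v *)
Require Import Defs.
From Stdlib Require Import Reals Lra Lia Arith.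
From Coquelicot Require Import Coquelicot.
Open Scope R_scope.

Lemma bernoulli (x : R) (n : nat) : -1 <= x -> 1 + INR n * x <= (1 + x) ^ n.
Proof.
  intro Hx. induction n as [|n IH].
  - simpl. lra.
  - rewrite S_INR. simpl.
    assert (0 <= INR n) by apply pos_INR.
    assert (0 <= INR n * x * x) by (rewrite Rmult_assoc; apply Rmult_le_pos; [lra| apply Rle_0_sqr]).
    nra.
Qed.

Lemma ln2_pos : 0 < ln 2.
Proof. rewrite <- ln_1. apply ln_increasing; lra. Qed.

Lemma log2_1 : log2 1 = 0.
Proof. unfold log2. rewrite ln_1. lra. Qed.

Lemma sum_f_rsum (f : nat -> R) (n : nat) : sum_f_R0 f n = rsum f 0 (S n).
Proof. induction n; simpl in *. lra. rewrite IHn. reflexivity. Qed.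

Lemma rsum_ext (f g : nat -> R) (a n : nat) :
  (forall i, (a <= i < a + n)%nat -> f i = g i) -> rsum f a n = rsum g a n.
Proof.
  induction n; intro H; simpl. reflexivity.
  rewrite IHn by (intros; apply H; lia). rewrite H by lia. reflexivity.
Qed.

Lemma rsum_le (f g : nat -> R) (a n : nat) :
  (forall i, (a <= i < a + n)%nat -> f i <= g i) -> rsum f a n <= rsum g a n.
Proof.
  induction n; intro H; simpl. lra.
  assert (rsum f a n <= rsum g a n) by (apply IHn; intros; apply H; lia).
  assert (f (a+n)%nat <= g (a+n)%nat) by (apply H; lia). lra.
Qed.

Lemma rsum_plus (f g : nat -> R) (a n : nat) :
  rsum (fun i => f i + g i) a n = rsum f a n + rsum g a n.
Proof. induction n; simpl. lra. rewrite IHn. lra. Qed.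

Lemma rsum_scal (c : R) (f : nat -> R) (a n : nat) :
  rsum (fun i => c * f i) a n = c * rsum f a n.
Proof. induction n; simpl. lra. rewrite IHn. lra. Qed.

Lemma rsum_tel (f : nat -> R) (n : nat) :
  rsum (fun i => f i - f (S i)) 0 n = f 0%nat - f n.
Proof. induction n; simpl. lra. rewrite IHn. lra. Qed.

Lemma rsum_ind (A : R) (j n : nat) : (j < n)%nat ->
  rsum (fun i => if (i =? j)%nat then A else 0) 0 n = A.
Proof.
  induction n; intro H; simpl. lia.
  destruct (Nat.eq_dec j n).
  - subst j. rewrite Nat.eqb_refl.
    rewrite (rsum_ext _ (fun _ => 0)).
    + clear. assert (forall m, rsum (fun _ => 0) 0 m = 0) as Z.
      { induction m; simpl; lra. } rewrite Z. lra.
    + intros i Hi. destruct (Nat.eqb_spec i n); [lia|reflexivity].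
  - rewrite IHn by lia. destruct (Nat.eqb_spec n j); [lia|]. lra.
Qed.

Lemma rsum_split (f : nat -> R) (m k : nat) :
  rsum f 0 (m + k) = rsum f 0 m + rsum f m k.
Proof.
  induction k. rewrite Nat.add_0_r. simpl. lra.
  rewrite Nat.add_succ_r. simpl. rewrite IHk. lra.
Qed.

Lemma rsum_zero (f : nat -> R) (a n : nat) :
  (forall i, (a <= i < a + n)%nat -> f i = 0) -> rsum f a n = 0.
Proof.
  intro H. rewrite (rsum_ext f (fun _ => 0)) by auto. clear.
  induction n; simpl; lra.
Qed.

Definition upd (x : nat -> R) (a : nat) (v : R) : nat -> R :=
  fun i => if (i =? a)%nat then v else x i.

Lemma prefix_upd (x : nat -> R) (a : nat) (v : R) (m : nat) :
  prefix (upd x a v) m = prefix x m + (if (a <? m)%nat then v - x a else 0).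
Proof.
  unfold prefix. induction m; simpl.
  - destruct a; simpl; lra.
  - rewrite IHm. unfold upd.
    destruct (Nat.eqb_spec m a).
    + subst. destruct (Nat.ltb_spec a a); [lia|].
      destruct (Nat.ltb_spec a (S a)); [|lia]. lra.
    + destruct (Nat.ltb_spec a m); destruct (Nat.ltb_spec a (S m)); try lia; lra.
Qed.

Lemma prefix_ext_le (N : nat) (x : nat -> R) (m : nat) :
  (m <= N)%nat -> prefix (ext N x) m = prefix x m.
Proof.
  unfold prefix. induction m; intro H; simpl. reflexivity.
  rewrite IHm by lia. unfold ext. destruct (Nat.ltb_spec m N); [|lia]. reflexivity.
Qed.

Lemma prefix_ext_ge (N : nat) (x : nat -> R) (m : nat) :
  (N <= m)%nat -> prefix (ext N x) m = prefix x N.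
Proof.
  intro H. assert (Em : m = (N + (m - N))%nat) by lia. rewrite Em.
  unfold prefix. rewrite rsum_split. fold (prefix (ext N x) N).
  rewrite prefix_ext_le by lia. unfold prefix.
  rewrite (rsum_zero (ext N x) N). lra. intros i Hi. unfold ext.
  destruct (Nat.ltb_spec i N); [lia|reflexivity].
Qed.

Definition t2 (p gamma : R) (w : nat) (x : nat -> R) (i : nat) : R :=
  p * (1 - p) ^ (S i + w - 1) * (1 / 2) * log2 (1 + gamma * x i).
Definition t3 (p gamma B : R) (w : nat) (x : nat -> R) (i : nat) : R :=
  p ^ 2 * (1 - p) ^ (S i + w - 1) * (INR w / 2)
    * log2 (1 + gamma * ((B - prefix x (S i)) / INR w)).

Lemma T_inf_eq p gamma B w x : T_inf p gamma B w x =
  rsum (fun k => p ^ 2 * (1 - p) ^ (k - 1) * (INR k / 2)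
                   * log2 (1 + gamma * (B / INR k))) 1 w
  + Series (t2 p gamma w x) + Series (t3 p gamma B w x).
Proof. reflexivity. Qed.

Lemma ex_series_zero (f : nat -> R) : (forall n, f n = 0) -> ex_series f.
Proof.
  intro H. apply (ex_series_ext (fun n => (1/2)^n * 0)).
  intro n. rewrite H. change ((1/2)^n * 0 = 0). ring.
  apply ex_series_scal_r, ex_series_geom. rewrite Rabs_right; lra.
Qed.

Lemma Series_zero (f : nat -> R) : (forall n, f n = 0) -> Series f = 0.
Proof.
  intro H. rewrite (Series_ext f (fun n => 0 * 1)) by (intro; rewrite H; ring).
  rewrite Series_scal_l. ring.
Qed.

Lemma ex_t2 p gamma w N x : ex_series (t2 p gamma w (ext N x)).
Proof.
  apply (ex_series_incr_n _ N). apply ex_series_zero. intro k.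
  unfold t2, ext. destruct (Nat.ltb_spec (N + k) N); [lia|].
  rewrite Rmult_0_r, Rplus_0_r, log2_1. ring.
Qed.

Lemma t3_tail p gamma B w N x k :
  t3 p gamma B w (ext N x) (N + k)%nat =
  (p ^ 2 * (INR w / 2) * log2 (1 + gamma * ((B - prefix x N) / INR w)) * (1 - p) ^ (N + w))
  * (1 - p) ^ k.
Proof.
  unfold t3. rewrite prefix_ext_ge by lia.
  replace (S (N + k) + w - 1)%nat with (N + w + k)%nat by lia.
  rewrite pow_add. ring.
Qed.

Lemma ex_t3 p gamma B w N x : 0 < p < 1 -> ex_series (t3 p gamma B w (ext N x)).
Proof.
  intro Hp.
  apply (ex_series_incr_n _ N).
  apply (ex_series_ext (fun k => (1-p)^k * (p ^ 2 * (INR w / 2) * log2 (1 + gamma * ((B - prefix x N) / INR w)) * (1 - p) ^ (N + w)))).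
  intro k. rewrite t3_tail. change ((1 - p) ^ k * (p ^ 2 * (INR w / 2) * log2 (1 + gamma * ((B - prefix x N) / INR w)) * (1 - p) ^ (N + w)) = p ^ 2 * (INR w / 2) * log2 (1 + gamma * ((B - prefix x N) / INR w)) * (1 - p) ^ (N + w) * (1 - p) ^ k). ring.
  apply ex_series_scal_r, ex_series_geom. rewrite Rabs_right; lra.
Qed.

Lemma ex_minus_R (a b : nat -> R) : ex_series a -> ex_series b ->
  ex_series (fun n => a n - b n).
Proof.
  intros Ha Hb. apply (ex_series_ext (fun n => plus (a n) (opp (b n)))).
  intro n. reflexivity. exact (@ex_series_minus _ R_NormedModule a b Ha Hb).
Qed.

Lemma ex_plus_R (a b : nat -> R) : ex_series a -> ex_series b ->
  ex_series (fun n => a n + b n).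
Proof.
  intros Ha Hb. apply (ex_series_ext (fun n => plus (a n) (b n))).
  intro n. reflexivity. exact (@ex_series_plus _ R_NormedModule a b Ha Hb).
Qed.

Definition Dd p gamma B w N (x y : nat -> R) (i : nat) : R :=
  t2 p gamma w (ext N y) i - t2 p gamma w (ext N x) i
  + (t3 p gamma B w (ext N y) i - t3 p gamma B w (ext N x) i).

Lemma T_diff p gamma B w N x y : 0 < p < 1 -> (1 <= N)%nat ->
  T_N p gamma B w N y - T_N p gamma B w N x =
  rsum (Dd p gamma B w N x y) 0 N + Series (fun k => Dd p gamma B w N x y (N + k)).
Proof.
  intros Hp HN. unfold T_N. rewrite !T_inf_eq.
  assert (E : Series (Dd p gamma B w N x y) =
    Series (t2 p gamma w (ext N y)) - Series (t2 p gamma w (ext N x))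
    + (Series (t3 p gamma B w (ext N y)) - Series (t3 p gamma B w (ext N x)))).
  { unfold Dd. rewrite Series_plus.
    - rewrite !Series_minus; auto using ex_t2, ex_t3.
    - apply ex_minus_R; auto using ex_t2.
    - apply ex_minus_R; auto using ex_t3. }
  rewrite Series_incr_n with (n := N) in E by (try lia; unfold Dd;
    apply ex_plus_R; apply ex_minus_R; auto using ex_t2, ex_t3).
  rewrite sum_f_rsum in E. replace (S (Init.Nat.pred N)) with N in E by lia.
  lra.
Qed.

Lemma Dd_tail p gamma B w N x y k :
  Dd p gamma B w N x y (N + k) =
  (p ^ 2 * (INR w / 2) * (log2 (1 + gamma * ((B - prefix y N) / INR w))
     - log2 (1 + gamma * ((B - prefix x N) / INR w))) * (1 - p) ^ (N + w)) * (1 - p) ^ k.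
Proof.
  unfold Dd. rewrite !t3_tail.
  unfold t2, ext. destruct (Nat.ltb_spec (N + k) N); [lia|].
  rewrite Rmult_0_r, Rplus_0_r, log2_1. ring.
Qed.

Lemma Dd_eval p gamma B w N x y i : (i < N)%nat ->
  Dd p gamma B w N x y i =
  p * (1 - p) ^ (i + w) * (1 / 2) * (log2 (1 + gamma * y i) - log2 (1 + gamma * x i))
  + p ^ 2 * (1 - p) ^ (i + w) * (INR w / 2)
    * (log2 (1 + gamma * ((B - prefix y (S i)) / INR w))
       - log2 (1 + gamma * ((B - prefix x (S i)) / INR w))).
Proof.
  intro Hi. unfold Dd, t2, t3. rewrite !prefix_ext_le by lia.
  unfold ext. destruct (Nat.ltb_spec i N); [|lia].
  replace (S i + w - 1)%nat with (i + w)%nat by lia. ring.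
Qed.

Lemma find_last (x : nat -> R) (n : nat) : 0 < prefix x n ->
  exists j, (j < n)%nat /\ 0 < x j /\ forall k, (j < k < n)%nat -> x k <= 0.
Proof.
  induction n as [|n IH]; intro H.
  - unfold prefix in H; simpl in H; lra.
  - unfold prefix in H; simpl in H. fold (prefix x n) in H.
    destruct (Rlt_dec 0 (x n)).
    + exists n. split; [lia|]. split; auto. intros; lia.
    + destruct IH as [j [Hj [Hxj Hk]]]. lra.
      exists j. split; [lia|]. split; auto. intros k Hk'.
      destruct (Nat.eq_dec k n). subst; lra. apply Hk; lia.
Qed.

Lemma prefix_split (x : nat -> R) (m n : nat) : (m <= n)%nat ->
  prefix x n = prefix x m + rsum x m (n - m).
Proof.
  intro H. unfold prefix. rewrite <- rsum_split. f_equal. lia.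
Qed.

Lemma log2_lt a b : 0 < a -> a < b -> log2 a < log2 b.
Proof.
  intros. unfold log2. apply Rmult_lt_compat_r.
  apply Rinv_0_lt_compat, ln2_pos. apply ln_increasing; auto.
Qed.

Lemma ln_le' x y : 0 < x -> x <= y -> ln x <= ln y.
Proof.
  intros Hx [H|H]. left; apply ln_increasing; auto. subst; lra.
Qed.

Lemma log2_pos_of_ln (a : R) : 0 < a -> 0 < a / ln 2.
Proof. intro; apply Rdiv_lt_0_compat; auto using ln2_pos. Qed.

Lemma key2 (g e : R) (w : nat) : 0 < g -> 0 < e -> (1 <= w)%nat ->
  log2 (1 + g * e) <= INR w * log2 (1 + g * (e / INR w)).
Proof.
  intros Hg He Hw. assert (HW : 1 <= INR w) by (apply (le_INR 1); lia).
  assert (Hge : 0 < g * e) by nra.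
  assert (H0 : 0 < g * (e / INR w)) by (apply Rmult_lt_0_compat; auto; apply Rdiv_lt_0_compat; lra).
  unfold log2. unfold Rdiv at 2 3.
  rewrite <- Rmult_assoc. apply Rmult_le_compat_r.
  left; apply Rinv_0_lt_compat, ln2_pos.
  rewrite <- ln_pow by lra. apply ln_le'. lra.
  eapply Rle_trans; [|apply bernoulli; nra].
  right. field. lra.
Qed.

Lemma key3 (g x : R) : 0 < g -> 0 < x ->
  0 < log2 (1 + g * (x - x / 2)) - log2 (1 + g * x) + log2 (1 + g * (x / 2)).
Proof.
  intros Hg Hx. replace (x - x/2) with (x/2) by field.
  assert (0 < g * (x/2)) by nra.
  unfold log2.
  replace (ln (1 + g * (x / 2)) / ln 2 - ln (1 + g * x) / ln 2 + ln (1 + g * (x / 2)) / ln 2)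
    with ((ln ((1 + g * (x / 2)) * (1 + g * (x / 2))) - ln (1 + g * x)) / ln 2).
  2:{ rewrite ln_mult by lra. field. apply Rgt_not_eq, ln2_pos. }
  apply log2_pos_of_ln. apply Rlt_0_minus. apply ln_increasing. nra. nra.
Qed.

Lemma key1 (g B S : R) (w : nat) : 0 < g -> S < B -> (1 <= w)%nat ->
  0 < log2 (1 + g * ((B - S) / (2 * INR w)))
      + INR w * (log2 (1 + g * ((B - (S + (B - S) / (2 * INR w))) / INR w))
                 - log2 (1 + g * ((B - S) / INR w))).
Proof.
  intros Hg HS Hw. assert (HW : 1 <= INR w) by (apply (le_INR 1); lia).
  set (W := INR w) in *.
  set (t := g * (B - S) / W).
  assert (Ht : 0 < t) by (unfold t; apply Rdiv_lt_0_compat; nra).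
  replace (g * ((B - S) / (2 * W))) with (t / 2) by (unfold t; field; lra).
  replace (g * ((B - (S + (B - S) / (2 * W))) / W)) with (t - t / (2 * W)) by (unfold t; field; lra).
  replace (g * ((B - S) / W)) with t by (unfold t; field; lra).
  assert (Hc : 0 < 1 - t / (2 * (1 + t))).
  { apply Rlt_0_minus. apply (Rmult_lt_reg_r (2 * (1 + t))). lra.
    unfold Rdiv. rewrite Rmult_assoc, Rinv_l by lra. lra. }
  assert (Hv : 0 < 1 + (t - t / (2 * W))).
  { assert (t / (2 * W) <= t / 2).
    { unfold Rdiv. apply Rmult_le_compat_l. lra. apply Rinv_le_contravar; lra. }
    assert (0 < t / 2) by lra. lra. }
  assert (Bn : 1 + INR w * ((1 + (t - t / (2 * W))) / (1 + t) - 1) <=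
              ((1 + (t - t / (2 * W))) / (1 + t)) ^ w).
  { set (z := (1 + (t - t / (2 * W))) / (1 + t)).
    replace (z ^ w) with ((1 + (z - 1)) ^ w) by (f_equal; ring).
    apply bernoulli. assert (0 < z) by (apply Rdiv_lt_0_compat; lra). lra. }
  fold W in Bn.
  replace (1 + W * ((1 + (t - t / (2 * W))) / (1 + t) - 1)) with (1 - t / (2 * (1 + t))) in Bn
    by (field; lra).
  unfold log2.
  replace (ln (1 + t / 2) / ln 2 + W * (ln (1 + (t - t / (2 * W))) / ln 2 - ln (1 + t) / ln 2))
    with ((ln (1 + t / 2) + ln (((1 + (t - t / (2 * W))) / (1 + t)) ^ w)) / ln 2).
  2:{ rewrite ln_pow by (apply Rdiv_lt_0_compat; lra).
      change ((1 + (t - t / (2 * W))) / (1 + t)) with ((1 + (t - t / (2 * W))) * / (1 + t)).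
      rewrite ln_mult by (try apply Rinv_0_lt_compat; lra). rewrite ln_Rinv by lra.
      fold W. field. apply Rgt_not_eq, ln2_pos. }
  apply log2_pos_of_ln.
  eapply Rlt_le_trans with (ln (1 + t / 2) + ln (1 - t / (2 * (1 + t)))).
  - rewrite <- ln_mult by lra. rewrite <- ln_1. apply ln_increasing. lra.
    replace ((1 + t / 2) * (1 - t / (2 * (1 + t)))) with (1 + t * t / (4 * (1 + t))) by (field; lra).
    assert (0 < t * t / (4 * (1 + t))) by (apply Rdiv_lt_0_compat; nra). lra.
  - apply Rplus_le_compat_l. apply ln_le'; lra.
Qed.

Ltac simpl_b :=
  repeat match goal with
  | |- context [(?a <? ?b)%nat] =>
      first [rewrite (proj2 (Nat.ltb_lt a b)) by lia | rewrite (proj2 (Nat.ltb_ge a b)) by lia]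
  | |- context [(?a =? ?b)%nat] =>
      first [rewrite (proj2 (Nat.eqb_eq a b)) by lia | rewrite (proj2 (Nat.eqb_neq a b)) by lia]
  end.

Theorem lemma3 (p gamma B : R) (w N : nat) (xi : nat -> R) :
  0 < p < 1 -> 0 < gamma -> 0 < B -> (1 <= w)%nat -> (1 <= N)%nat ->
  is_maximizer p gamma B w N xi ->
  (forall eta, is_maximizer p gamma B w N eta ->
     forall i, (i < N)%nat -> eta i = xi i) ->
  0 < xi (N - 1)%nat.
Proof.
  intros Hp Hg HB Hw HN [[Hnn Hsum] Hmax] _.
  destruct (Rlt_or_le 0 (xi (N-1)%nat)) as [H|Hle]; [exact H|exfalso].
  assert (X0 : xi (N-1)%nat = 0) by (specialize (Hnn (N-1)%nat ltac:(lia)); lra).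
  assert (HW : 1 <= INR w) by (apply (le_INR 1); lia).
  assert (Hq : 0 < 1 - p < 1) by lra.
  set (S0 := prefix xi N) in *.
  destruct (Rlt_or_le S0 B) as [HSB|HSB].
  -
    set (e := (B - S0) / (2 * INR w)).
    assert (He : 0 < e) by (unfold e; apply Rdiv_lt_0_compat; lra).
    assert (He2 : e <= B - S0).
    { unfold e. apply (Rmult_le_reg_r (2 * INR w)). lra.
      unfold Rdiv. rewrite Rmult_assoc, Rinv_l by lra. nra. }
    set (y := upd xi (N-1) e).
    assert (Py : prefix y N = S0 + e).
    { unfold y. rewrite prefix_upd. simpl_b. rewrite X0. unfold S0. ring. }
    assert (Hadm : admissibleN B N y).
    { split. intros i Hi. unfold y, upd. destruct (Nat.eqb_spec i (N-1)); [lra|auto].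
      lra. }
    specialize (Hmax y Hadm).
    enough (0 < T_N p gamma B w N y - T_N p gamma B w N xi) by lra.
    rewrite T_diff by (lra || lia).
    rewrite (rsum_ext _ (fun i => if (i =? N-1)%nat then Dd p gamma B w N xi y (N-1) else 0)).
    2:{ intros i Hi. destruct (Nat.eqb_spec i (N-1)); [subst; reflexivity|].
        rewrite Dd_eval by lia.
        assert (y i = xi i) as ->. { unfold y, upd. simpl_b. reflexivity. }
        assert (prefix y (S i) = prefix xi (S i)) as ->.
        { unfold y. rewrite prefix_upd. simpl_b. ring. }
        ring. }
    rewrite rsum_ind by lia.
    rewrite (Series_ext _ _ (fun k => Dd_tail p gamma B w N xi y k)).
    rewrite Series_scal_l, Series_geom by (rewrite Rabs_right; lra).
    rewrite Dd_eval by lia.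
    replace (S (N-1)) with N by lia.
    rewrite Py. fold S0.
    assert (y (N-1)%nat = e) as ->. { unfold y, upd. simpl_b. reflexivity. }
    rewrite X0, Rmult_0_r, Rplus_0_r, log2_1.
    replace (N + w)%nat with (S (N - 1 + w)) by lia. rewrite <- (tech_pow_Rmult (1 - p)).
    set (E := (1 - p) ^ (N - 1 + w)).
    assert (HE : 0 < E) by (apply pow_lt; lra).
    pose proof (key1 gamma B S0 w Hg HSB Hw) as K1. fold e in K1.
    set (X := log2 (1 + gamma * e) +
         INR w * (log2 (1 + gamma * ((B - (S0 + e)) / INR w)) -
                  log2 (1 + gamma * ((B - S0) / INR w)))) in K1.
    replace (p * E * (1 / 2) * (log2 (1 + gamma * e) - 0) +
      p ^ 2 * E * (INR w / 2) *
      (log2 (1 + gamma * ((B - (S0 + e)) / INR w)) -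
       log2 (1 + gamma * ((B - S0) / INR w))) +
      p ^ 2 * (INR w / 2) *
      (log2 (1 + gamma * ((B - (S0 + e)) / INR w)) -
       log2 (1 + gamma * ((B - S0) / INR w))) * ((1 - p) * E) *
      / (1 - (1 - p))) with (p * E / 2 * X) by (unfold X; field; lra).
    apply Rmult_lt_0_compat; [|exact K1]. apply Rdiv_lt_0_compat; [|lra]. apply Rmult_lt_0_compat; lra.
  -
    assert (HS : S0 = B) by lra.
    destruct (find_last xi N) as [j [Hj [Hxj Hz]]]. fold S0; lra.
    assert (Hj' : (j < N - 1)%nat).
    { destruct (Nat.eq_dec j (N-1)). subst j. lra. lia. }
    assert (Zk : forall k, (j < k < N)%nat -> xi k = 0).
    { intros k Hk. specialize (Hz k Hk). specialize (Hnn k ltac:(lia)). lra. }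
    assert (PB : forall m, (j < m <= N)%nat -> prefix xi m = B).
    { intros m Hm. rewrite <- HS. unfold S0. rewrite (prefix_split xi m N) by lia.
      rewrite rsum_zero. ring. intros i Hi. apply Zk. lia. }
    set (e := xi j / 2).
    assert (He : 0 < e) by (unfold e; lra).
    set (y := upd (upd xi j (xi j - e)) (N-1) e).
    assert (Py : forall m, prefix y m = prefix xi m + (if (j <? m)%nat then - e else 0)
                                      + (if (N - 1 <? m)%nat then e else 0)).
    { intro m. unfold y. rewrite !prefix_upd. unfold upd. simpl_b. rewrite X0.
      destruct (j <? m)%nat; destruct (N - 1 <? m)%nat; ring. }
    assert (Yv : forall i, y i = if (i =? N-1)%nat then e else if (i =? j)%nat then xi j - e else xi i).
    { intro i. reflexivity. }
    assert (PyN : prefix y N = B).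
    { rewrite Py. simpl_b. fold S0. lra. }
    assert (Hadm : admissibleN B N y).
    { split. intros i Hi. rewrite Yv.
      destruct (Nat.eqb_spec i (N-1)). lra. destruct (Nat.eqb_spec i j). unfold e; lra. auto.
      lra. }
    specialize (Hmax y Hadm).
    enough (0 < T_N p gamma B w N y - T_N p gamma B w N xi) by lra.
    rewrite T_diff by (lra || lia).
    rewrite (Series_ext _ _ (fun k => Dd_tail p gamma B w N xi y k)).
    rewrite PyN. fold S0. rewrite HS.
    rewrite Series_zero by (intro; ring). rewrite Rplus_0_r.
    set (q := 1 - p).
    set (L1 := log2 (1 + gamma * e)).
    set (A := p * q ^ (j + w) * (1/2) * (log2 (1 + gamma * (xi j - e)) - log2 (1 + gamma * xi j))).
    set (K := p / 2 * L1).
    set (f := fun i => if (i <? N)%nat then q ^ (Nat.max i j + w) else 0).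
    apply Rlt_le_trans with (rsum (fun i => (if (i =? j)%nat then A else 0) + K * (f i - f (S i))) 0 N).
    + rewrite rsum_plus, rsum_ind, rsum_scal, rsum_tel by lia.
      unfold f. simpl_b. simpl Nat.max.
      pose proof (key3 gamma (xi j) Hg Hxj) as K3. fold e in K3. fold L1 in K3.
      replace (A + K * (q ^ (j + w) - 0)) with (p * q ^ (j + w) / 2 *
         (log2 (1 + gamma * (xi j - e)) - log2 (1 + gamma * xi j) + L1))
         by (unfold A, K; field).
      apply Rmult_lt_0_compat; auto.
      apply Rdiv_lt_0_compat; [|lra]. apply Rmult_lt_0_compat; [lra|]. apply pow_lt. unfold q; lra.
    + apply rsum_le. intros i Hi. rewrite Dd_eval by lia. rewrite Yv.
      rewrite Py. unfold f.
      pose proof (key2 gamma e w Hg He Hw) as K2. fold L1 in K2.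
      assert (Hqp : 0 < q ^ (i + w)) by (apply pow_lt; unfold q; lra).
      destruct (lt_eq_lt_dec i j) as [[Hij|Hij]|Hij].
      * simpl_b. rewrite (Nat.max_r i j) by lia. rewrite (Nat.max_r (S i) j) by lia.
        rewrite !Rplus_0_r. apply Req_le; ring.
      * subst i. simpl_b. rewrite (Nat.max_l j j) by lia. rewrite (Nat.max_l (S j) j) by lia.
        rewrite PB by lia.
        replace ((B - (B + - e + 0)) / INR w) with (e / INR w) by (field; lra).
        replace ((B - B) / INR w) with 0 by (field; lra).
        rewrite Rmult_0_r, Rplus_0_r, log2_1.
        replace (S j + w)%nat with (S (j + w)) by lia. rewrite <- (tech_pow_Rmult q).
        unfold A, K.
        assert (0 <= p ^ 2 * q ^ (j + w) * (INR w * log2 (1 + gamma * (e / INR w)) - L1)).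
        { apply Rmult_le_pos; [|lra]. apply Rmult_le_pos; [|lra]. apply pow_le; lra. }
        unfold q in *. nra.
      * destruct (Nat.eq_dec i (N-1)).
        -- subst i. simpl_b. rewrite (Nat.max_l (N-1) j) by lia.
           replace (S (N-1)) with N by lia. fold S0. rewrite HS.
           replace (B - (B + - e + e)) with (B - B) by ring.
           rewrite X0, Rmult_0_r, Rplus_0_r, log2_1. unfold K, L1, q. apply Req_le. rewrite Rminus_diag, Rmult_0_r, Rplus_0_r, Rplus_0_l, Rminus_0_r, Rminus_0_r. field.
        -- simpl_b. rewrite (Nat.max_l i j) by lia. rewrite (Nat.max_l (S i) j) by lia.
           rewrite PB by lia.
           replace ((B - (B + - e + 0)) / INR w) with (e / INR w) by (field; lra).
           replace ((B - B) / INR w) with 0 by (field; lra).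
           rewrite Rmult_0_r, Rplus_0_r, log2_1.
           replace (S i + w)%nat with (S (i + w)) by lia. rewrite <- (tech_pow_Rmult q).
           unfold K.
           assert (0 <= p ^ 2 * q ^ (i + w) * (INR w * log2 (1 + gamma * (e / INR w)) - L1)).
           { apply Rmult_le_pos; [|lra]. apply Rmult_le_pos; [|lra]. apply pow_le; lra. }
           unfold q in *. nra.
Qed.
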